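(* Let $m,n,k$ be positive integers, $A\in\mathbb{R}^{m\times n}$, $x^*\in\mathbb{R}^n$ with support $S^*$ satisfying $1\le|S^*|\le k$, $e\in\mathbb{R}^m$, $y=Ax^*+e$. Let $\mathcal{X}^0\in\mathbb{R}^n$, $\eta>0$, and let $(S^t,x^t,\mathcal{X}^t)_{t\ge0}$ be the sequence generated by SEA. Let $b^t=u^t-\eta A^T(Ax^t-y)$ and $B=\sup_{t\in\mathbb{N}}\|b^t\|_\infty$. If $$B<\frac{\eta}{2k}\min_{i\in S^*}|x^*_i|,$$ then there exists an integer $t_s\le T_{max}$ such that $S^*\subseteq S^{t_s}$, where $$T_{max}=\frac{2k\|\mathcal{X}^0\|_\infty+(k+1)\eta\min_{i\in S^*}|x^*_i|}{\eta\min_{i\in S^*}|x^*_i|-2kB}.$$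
   Context: $S^*=\{i:x^*_i\neq0\}$. For $v\in\mathbb{R}^n$, $\mathrm{largest}_k(v)$ is the set of indices of the $k$ entries of $v$ with largest absolute value (ties broken by selecting the highest indices). For $S\subseteq\{1,\dots,n\}$, $A_S$ is the submatrix of columns indexed by $S$, $v_S$ the restriction of a vector to $S$, $A_S^\dagger$ the Moore–Penrose pseudoinverse of $A_S$. SEA with initialization $\mathcal{X}^0$ and step size $\eta$ generates, for $t=0,1,2,\dots$: $S^t=\mathrm{largest}_k(\mathcal{X}^t)$; $x^t_i=0$ for $i\notin S^t$ and $x^t_{S^t}=A_{S^t}^\dagger y$; $\mathcal{X}^{t+1}=\mathcal{X}^t-\eta A^T(Ax^t-y)$. The oracle direction is $u^t\in\mathbb{R}^n$ with $u^t_i=-\eta x^*_i$ if $i\in S^*\setminus S^t$ and $u^t_i=0$ otherwise. *)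

(* Defs.v *)
From HB Require Import structures.
From mathcomp Require Import all_boot all_order all_algebra.
From mathcomp Require Import all_classical all_reals all_analysis.
Set Implicit Arguments. Unset Strict Implicit. Unset Printing Implicit Defensive.
Import Order.TTheory GRing.Theory Num.Theory.
Local Open Scope ring_scope.

Section SEA.
Variable R : realType.

(* Moore–Penrose pseudoinverse: the (unique) matrix satisfying the four
   Penrose equations, picked by classical choice. *)
Definition is_pinv (p q : nat) (M : 'M[R]_(p, q)) (P : 'M[R]_(q, p)) : Prop :=
  [/\ M *m P *m M = M, P *m M *m P = P,
      (M *m P)^T = M *m P & (P *m M)^T = P *m M].

Definition pinv (p q : nat) (M : 'M[R]_(p, q)) : 'M[R]_(q, p) :=
  xget 0 [set P | is_pinv M P].

Variables (m n : nat).

Definition normInf (v : 'cV[R]_n) : R := \big[Num.max/0]_(i < n) `|v i 0|.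

Definition supp (v : 'cV[R]_n) : {set 'I_n} := [set i | v i 0 != 0].

(* min_{i in S} |v_i| (the identity element normInf v is >= every |v_i|,
   so this is the true minimum whenever S is nonempty) *)
Definition minabs (v : 'cV[R]_n) (S : {set 'I_n}) : R :=
  \big[Num.min/normInf v]_(i in S) `|v i 0|.

(* j is ranked strictly before i: larger absolute value, ties broken
   in favour of the higher index *)
Definition beats (v : 'cV[R]_n) (j i : 'I_n) : bool :=
  (`|v i 0| < `|v j 0|) || ((`|v j 0| == `|v i 0|) && (i < j)%N).

Definition largest_k (k : nat) (v : 'cV[R]_n) : {set 'I_n} :=
  [set i | (#|[set j | beats v j i]| < k)%N].

Definition colsel (S : {set 'I_n}) (M : 'M[R]_(m, n)) : 'M[R]_(m, #|S|) :=
  colsub (fun j : 'I_#|S| => enum_val j) M.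

(* the vector x with x_S = z and x_i = 0 outside S *)
Definition embed (S : {set 'I_n}) (z : 'cV[R]_#|S|) : 'cV[R]_n :=
  \col_i \sum_(j < #|S|) (if enum_val j == i then z j 0 else 0).

Variables (k : nat) (A : 'M[R]_(m, n)) (y : 'cV[R]_m) (eta : R).

Definition sea_S (X : 'cV[R]_n) : {set 'I_n} := largest_k k X.
Definition sea_x (X : 'cV[R]_n) : 'cV[R]_n :=
  embed (pinv (colsel (sea_S X) A) *m y).
Definition sea_next (X : 'cV[R]_n) : 'cV[R]_n :=
  X - eta *: (A^T *m (A *m sea_x X - y)).

Definition sea_X (X0 : 'cV[R]_n) (t : nat) : 'cV[R]_n := iter t sea_next X0.

Definition oracle_u (xs : 'cV[R]_n) (S : {set 'I_n}) : 'cV[R]_n :=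
  \col_i (if (i \in supp xs) && (i \notin S) then - eta * xs i 0 else 0).

Definition sea_b (xs X0 : 'cV[R]_n) (t : nat) : 'cV[R]_n :=
  oracle_u xs (sea_S (sea_X X0 t))
  - eta *: (A^T *m (A *m sea_x (sea_X X0 t) - y)).

End SEA.

(* Main.v *)
Require Import Defs.
From HB Require Import structures.
From mathcomp Require Import all_boot all_order all_algebra.
From mathcomp Require Import all_classical all_reals all_analysis.
From mathcomp Require Import lra zify ring.
Import Order.TTheory GRing.Theory Num.Theory.
Local Open Scope ring_scope.

Section H.
Variables (R : realType) (m n k : nat) (A : 'M[R]_(m, n)) (y : 'cV[R]_m) (eta : R).
Variables (xs X0 : 'cV[R]_n).

Lemma normInf_ge (v : 'cV[R]_n) i : `|v i 0| <= normInf v.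
Proof. by rewrite /normInf (bigD1 i) //= le_max lexx. Qed.

Lemma normInf_ge0 (v : 'cV[R]_n) : 0 <= normInf v.
Proof. rewrite /normInf; apply: (big_ind (fun x => 0 <= x)) => //= a b ha hb.
by rewrite le_max ha. Qed.

Lemma minabs_le i : i \in supp xs -> minabs xs (supp xs) <= `|xs i 0|.
Proof. by move=> Hi; rewrite /minabs (bigD1 i) //= ge_min lexx. Qed.

Lemma beats_out (v : 'cV[R]_n) i : i \in supp xs -> (#|supp xs| <= k)%N ->
  i \notin largest_k k v -> exists2 j, j \notin supp xs & `|v i 0| <= `|v j 0|.
Proof.
move=> Hi Hk Hn.
case: (boolP [exists j, (j \notin supp xs) && beats v j i]).
  case/existsP=> j /andP[Hj Hb]; exists j => //.
  by move: Hb; rewrite /beats => /orP[/ltW //|/andP[/eqP -> _]].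
rewrite negb_exists => /forallP Hall.
move: Hn; rewrite inE -leqNgt => Hn.
have Hsub : [set j | beats v j i] \subset supp xs :\ i.
  apply/fintype.subsetP=> j; rewrite finset.in_set => Hb.
  have Hj : j \in supp xs by move: (Hall j); rewrite Hb andbT negbK.
  rewrite in_setD1 Hj andbT.
  apply/eqP=> Eji; move: Hb; rewrite Eji /beats ltxx ltnn /=.
  by rewrite andbF.
have := subset_leq_card Hsub.
move: (cardsD1 i (supp xs)); rewrite Hi /= => E.
move=> H; exfalso; move: Hn Hk E H; set c := #|_|; set d := #|_|; set e := #|_|; lia.
Qed.

Let X t := sea_X k A y eta X0 t.
Let b t := sea_b k A y eta xs X0 t.
Let S t := sea_S k (X t).

Lemma X_step t i : X t.+1 i 0 = X t i 0 + b t i 0 +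
  (if (i \in supp xs) && (i \notin S t) then eta * xs i 0 else 0).
Proof.
rewrite /X /b /sea_X iterS /sea_next /sea_b /oracle_u /S !mxE.
case: ifP => _; lra.
Qed.


Variable Bv : R.
Hypothesis HB : forall t, normInf (b t) <= Bv.
Hypothesis Hk : (#|supp xs| <= k)%N.
Let N0 := normInf X0.

Lemma sg_b i t : i \in supp xs -> -Bv <= Num.sg (xs i 0) * b t i 0.
Proof.
move=> Hi.
have H1 : `|Num.sg (xs i 0) * b t i 0| <= Bv.
  rewrite normrM normr_sg.
  apply: le_trans (HB t); apply: le_trans (normInf_ge _ i).
  by case: (xs i 0 != 0); rewrite /= ?mul1r ?mul0r.
by move: H1; rewrite ler_norml => /andP[].
Qed.

Lemma sg_X i t : `|Num.sg (xs i 0) * X t i 0| <= `|X t i 0|.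
Proof. rewrite normrM normr_sg; case: (xs i 0 != 0); rewrite /= ?mul1r ?mul0r //. Qed.

Lemma out_bound j t : j \notin supp xs -> `|X t j 0| <= N0 + t%:R * Bv.
Proof.
move=> Hj; elim: t => [|t IH].
  by rewrite mul0r addr0 /X /sea_X /=; apply: normInf_ge.
rewrite X_step (negbTE Hj) /= addr0.
apply: le_trans (ler_normD _ _) _.
have := HB t; have := normInf_ge (b t) j.
rewrite mulrSr; lra.
Qed.

Definition Nc i t := \sum_(s < t) (if i \notin S s then 1 else 0 : R).

Lemma in_lower i t a : i \in supp xs -> a <= eta * `|xs i 0| ->
  - N0 - t%:R * Bv + Nc i t * a <= Num.sg (xs i 0) * X t i 0.
Proof.
move=> Hi Ha; elim: t => [|t IH].
  rewrite /Nc big_ord0 !mul0r subr0 addr0 /X /sea_X /=.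
  have := normInf_ge X0 i; have := sg_X i 0.
  rewrite /X /sea_X /= => h1 h2.
  have := ler_norml (Num.sg (xs i 0) * X0 i 0) `|X0 i 0|.
  rewrite (le_trans h1 (lexx _)) => /esym/andP[h3 _]; rewrite /N0; lra.
rewrite /Nc big_ord_recr /= -/(Nc i t) X_step Hi /= !mulrDr.
have := sg_b i t Hi; rewrite mulrSr.
case: ifP => _.
  rewrite mulrCA -normrEsg.

lra.
rewrite mulr0; lra.
Qed.

Lemma miss_upper i t : i \in supp xs -> i \notin S t ->
  Num.sg (xs i 0) * X t i 0 <= N0 + t%:R * Bv.
Proof.

move=> Hi Hn; have [j Hj Hle] := beats_out (X t) i Hi Hk Hn.
have := out_bound j t Hj; have := sg_X i t.
have := ler_norm (Num.sg (xs i 0) * X t i 0); lra.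
Qed.

Lemma claim i T a : i \in supp xs -> a <= eta * `|xs i 0| -> 0 <= a -> 0 <= Bv ->
  Nc i T * a <= a + 2 * N0 + 2 * (T%:R * Bv).
Proof.
move=> Hi Ha a0 B0; elim: T => [|T IH].
  rewrite /Nc big_ord0 mul0r mul0r mulr0 addr0; have := normInf_ge0 X0; rewrite /N0; lra.
rewrite /Nc big_ord_recr /= -/(Nc i T) mulrSr.
case: ifP => Hn.
  have := in_lower i T a Hi Ha; have := miss_upper i T Hi Hn; lra.
rewrite addr0; lra.
Qed.


Lemma sum_count T : (forall t, (t < T)%N -> ~~ (supp xs \subset S t)) ->
  T%:R <= \sum_(i in supp xs) Nc i T.
Proof.
move=> Hn; rewrite /Nc exchange_big /=.
have -> : T%:R = \sum_(s < T) (1:R) by rewrite sumr_const card_ord.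
apply: ler_sum => s _.
have [i Hi Hni] := fintype.subsetPn (Hn s (ltn_ord s)).
rewrite (bigD1 i) //= Hni.
have : 0 <= \sum_(j in supp xs | j != i) (if j \notin S s then 1 else 0 : R).
  by apply: sumr_ge0 => j _; case: ifP.
lra.
Qed.

Lemma final T a : 0 < a -> 0 <= Bv ->
  (forall i, i \in supp xs -> a <= eta * `|xs i 0|) ->
  (forall t, (t < T)%N -> ~~ (supp xs \subset S t)) ->
  T%:R * a <= k%:R * (a + 2 * N0 + 2 * (T%:R * Bv)).
Proof.
move=> a0 B0 Ha Hn.
apply: le_trans (_ : (\sum_(i in supp xs) Nc i T) * a <= _).
  by rewrite ler_pM2r //; apply: sum_count.
rewrite mulr_suml.
apply: le_trans (_ : \sum_(i in supp xs) (a + 2 * N0 + 2 * (T%:R * Bv)) <= _).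
  apply: ler_sum => i Hi; apply: claim => //; [exact: Ha | exact: ltW].
rewrite sumr_const -(mulr_natl _ #|supp xs|).
apply: ler_wpM2r; last by rewrite ler_nat.
have := normInf_ge0 X0; have : 0 <= T%:R * Bv by apply: mulr_ge0.
rewrite /N0; lra.
Qed.

End H.

Theorem theoremC4 (R : realType) (m n k : nat) (A : 'M[R]_(m, n))
  (xs : 'cV[R]_n) (e : 'cV[R]_m) (X0 : 'cV[R]_n) (eta : R) :
  (0 < m)%N -> (0 < n)%N -> (0 < k)%N ->
  (1 <= #|supp xs|)%N -> (#|supp xs| <= k)%N ->
  0 < eta ->
  let y := A *m xs + e in
  let B : \bar R :=
    ereal_sup (range (fun t : nat => (normInf (sea_b k A y eta xs X0 t))%:E)) in
  let xmin := minabs xs (supp xs) in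
  (B < (eta / (2 * k%:R) * xmin)%:E)%E ->
  let Tmax := (2 * k%:R * normInf X0 + (k%:R + 1) * eta * xmin)
              / (eta * xmin - 2 * k%:R * fine B) in
  exists ts : nat, ts%:R <= Tmax /\
    supp xs \subset sea_S k (sea_X k A y eta X0 ts).
Proof.
move=> m0 n0 k0 s1 sk eta0 y B xmin HBlt Tmax.
have Bnd : forall t, ((normInf (sea_b k A y eta xs X0 t))%:E <= B)%E.
  by move=> t; apply: ereal_sup_ubound; exists t.
have [Bv [HBv HBvB]] : exists Bv, (forall t, normInf (sea_b k A y eta xs X0 t) <= Bv)
    /\ B = Bv%:E.
  case E: B => [r| |].
  - by exists r; split => // t; have := Bnd t; rewrite E lee_fin.
  - by move: HBlt; rewrite E.
  - by move: (Bnd 0%N); rewrite E leeNy_eq.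
have fB : fine B = Bv by rewrite HBvB.
move: HBlt; rewrite HBvB lte_fin => HBlt.
have B0 : 0 <= Bv by apply: le_trans (HBv 0%N); apply: normInf_ge0.
have kpos : 0 < k%:R :> R by rewrite ltr0n.
have E2 : 2 * k%:R * (eta / (2 * k%:R) * xmin) = eta * xmin.
  by field; rewrite pnatr_eq0 -lt0n.
have HD : 2 * k%:R * Bv < eta * xmin.
  by rewrite -E2 ltr_pM2l // mulr_gt0.
set a := eta * xmin in HD E2.
have apos : 0 < a by apply: le_lt_trans HD; rewrite mulr_ge0 // mulr_ge0 // ler0n.
have Ha : forall i, i \in supp xs -> a <= eta * `|xs i 0|.
  by move=> i Hi; rewrite ler_pM2l //; apply: minabs_le.
set D := a - 2 * k%:R * Bv.
have Dpos : 0 < D by rewrite /D subr_gt0.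
set N0 := normInf X0.
have N00 : 0 <= N0 by apply: normInf_ge0.
set c := k%:R * a + 2 * k%:R * N0.
have c0 : 0 <= c by rewrite /c; have := ltW kpos; have := ltW apos; nra.
set T := (Num.truncn (c / D)).+1.
have HT : c / D < T%:R := Num.Theory.truncnS_gt _.
have TmaxE : Tmax = (c + a) / D.
  by rewrite /Tmax fB /c /D -/N0 -/a; congr (_ / _); rewrite /a; ring.
case: (boolP [exists t : 'I_T, supp xs \subset sea_S k (sea_X k A y eta X0 t)]).
  case/existsP=> t Ht; exists (val t); split => //.
  rewrite TmaxE.
  have : (val t)%:R <= c / D.
    apply: le_trans (_ : (Num.truncn (c / D))%:R <= _).
      by rewrite ler_nat -ltnS ltn_ord.
    by rewrite Num.Theory.truncn_le divr_ge0 // ltW.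
  move=> h; apply: le_trans h _.
  by rewrite ler_pM2r ?invr_gt0 //; lra.
rewrite negb_exists => /forallP Hall.
have Hn : forall t, (t < T)%N -> ~~ (supp xs \subset sea_S k (sea_X k A y eta X0 t)).
  by move=> t Ht; exact: (Hall (Ordinal Ht)).
have := @final _ _ _ _ _ _ _ _ _ _ HBv sk T a apos B0 Ha Hn.
move: HT; rewrite ltr_pdivrMr // => HT.
rewrite /D in HT; rewrite /c -/N0 in HT.
move=> H; exfalso.
rewrite -/N0 in H; nra.
Qed.
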